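(* Let $F=(n_F)_{n\ge0}$ be the Fibonacci sequence, $0_F=0$, $1_F=2_F=1$, $(n+2)_F=(n+1)_F+n_F$. Then for all integers $k,n$ with $0\le k<n$, the layer $\langle\Phi_{k+1}\to\Phi_n\rangle$ of the cobweb poset of $F$ (which has $m=n-k$ levels) admits at least one tiling by blocks of type $\sigma P_m$.
   Context: Notation: $n_F\equiv F_n$. For a sequence $F=(n_F)_{n\ge0}$ of nonnegative integers, the cobweb poset of $F$ has, for each $s\ge1$, a level $\Phi_s$ consisting of $s_F$ distinct vertices (levels pairwise disjoint), plus a root level $\Phi_0$ with one vertex; for $x\in\Phi_i$, $y\in\Phi_j$ one has $x<y$ iff $i<j$. For $1\le a\le b$, the layer $\langle\Phi_a\to\Phi_b\rangle$ is the subposet on $\Phi_a\cup\dots\cup\Phi_b$; it has $m=b-a+1$ levels, and its maximal chains are exactly the tuples $(x_a,\dots,x_b)$ with $x_j\in\Phi_j$, i.e. the set $\Phi_a\times\dots\times\Phi_b$. For a permutation $\sigma$ of $\{1,\dots,m\}$, a block of type $\sigma P_m$ in this layer is the subposet induced on $V_a\cup\dots\cup V_b$ where $V_{a-1+i}\subseteq\Phi_{a-1+i}$ and $|V_{a-1+i}|=\sigma(i)_F$ for $i=1,\dots,m$ (a copy of the prime cobweb poset $P_m$, whose levels have sizes $1_F,\dots,m_F$, with its levels permuted by $\sigma$); its maximal chains form the set $V_a\times\dots\times V_b$. A tiling of the layer by blocks of type $\sigma P_m$ is a finite family of such blocks ($\sigma$ may vary from block to block) that are pairwise max-disjoint (no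 two share a maximal chain) and together contain every maximal chain of the layer; equivalently, the sets $V_a\times\dots\times V_b$ of the blocks partition $\Phi_a\times\dots\times\Phi_b$. *)

(* Defs.v *)
From Stdlib Require List.
From mathcomp Require Import all_boot all_fingroup.
Set Implicit Arguments. Unset Strict Implicit. Unset Printing Implicit Defensive.

Fixpoint fib (n : nat) : nat :=
  match n with
  | 0 => 0
  | 1 => 1
  | (m.+1 as p).+1 => fib p + fib m
  end.

(* Level s of the cobweb poset of F is 'I_(fib s).
   The layer <Phi_{k+1} -> Phi_{k+m}> has m levels; its level with 0-based
   index i : 'I_m is Phi_{k+1+i}.  A maximal chain of the layer is a choice
   of one vertex in each of its levels. *)
Definition chain (k m : nat) := {dffun forall i : 'I_m, 'I_(fib (k.+1 + i))}.

Record block (k m : nat) := Block {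
  bperm : {perm 'I_m};
  bsets : forall i : 'I_m, {set 'I_(fib (k.+1 + i))}
}.

(* Block of type sigma P_m: |V_{a-1+i}| = sigma(i)_F (1-based), i.e. with
   0-based index i, |V_i| = fib (sigma i + 1). *)
Definition block_of_type (k m : nat) (B : block k m) : Prop :=
  forall i : 'I_m, #|bsets B i| = fib (bperm B i).+1.

Definition block_chains (k m : nat) (B : block k m) : {set chain k m} :=
  [set c : chain k m | [forall i, c i \in bsets B i]].

Definition is_tiling (k m : nat) (T : seq (block k m)) : Prop :=
  [/\ (forall B, Stdlib.Lists.List.In B T -> block_of_type B),
      pairwise (fun B1 B2 => [disjoint block_chains B1 & block_chains B2]) T
    & forall c : chain k m, exists2 B, Stdlib.Lists.List.In B T & c \in block_chains B].

(* Main.v *)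
Require Import Defs.
From mathcomp Require Import all_boot all_fingroup.
From Stdlib Require Import Lia.
From Stdlib Require List.

Ltac tolia := intros; repeat match goal with H : is_true (leq _ _) |- _ => let H2 := fresh "L" in have H2 := elimT leP H; clear H end;
  try apply/leP;
  repeat match goal with H : ?P |- _ => match P with context [addn] => rewrite -plusE in H end end;
  repeat match goal with H : ?P |- _ => match P with context [subn] => rewrite -minusE in H end end;
  repeat match goal with H : ?P |- _ => match P with context [muln] => rewrite -multE in H end end;
  rewrite -?plusE -?minusE -?multE; lia.

Lemma fib_add a b : fib (a + b).+1 = fib a.+1 * fib b.+1 + fib a * fib b.
Proof.
elim: a b => [|a IH] b; first by rewrite add0n mul1n mul0n addn0.
rewrite addSnnS IH.
change (fib b.+2) with (fib b.+1 + fib b).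
change (fib a.+2) with (fib a.+1 + fib a).
rewrite mulnDr mulnDl; tolia.
Qed.

Definition tile := ((nat -> nat) * (nat -> nat))%type.
Definition tlen (t : tile) i := fib (t.1 i).+1.
Arguments fib : simpl never.
Arguments tlen : simpl never.
Definition inT (m : nat) (x : nat -> nat) (t : tile) : bool :=
  all (fun i => (t.2 i <= x i) && (x i < t.2 i + tlen t i)) (iota 0 m).
Definition tok m (d : nat -> nat) (t : tile) :=
  [/\ forall i, i < m -> t.1 i < m,
      forall i j, i < m -> j < m -> t.1 i = t.1 j -> i = j
    & forall i, i < m -> t.2 i + tlen t i <= d i].
Definition inbox m d (x : nat -> nat) := forall i, i < m -> x i < d i.
Definition Good m d (T : seq tile) :=
  (forall t, List.In t T -> tok m d t) /\
  (forall x, inbox m d x -> count (inT m x) T = 1).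

Lemma inTP m x t :
  reflect (forall i, i < m -> (t.2 i <= x i) && (x i < t.2 i + tlen t i)) (inT m x t).
Proof.
apply: (iffP allP) => H i Hi.
  by apply: H; rewrite mem_iota add0n.
by apply: H; move: Hi; rewrite mem_iota add0n.
Qed.

Lemma count0 (p : pred tile) T : (forall t, List.In t T -> ~~ p t) -> count p T = 0.
Proof.
elim: T => [|a T IH] //= H.
by rewrite (negbTE (H a (or_introl erefl))) IH // => t Ht; apply: H; right.
Qed.

Lemma count_pos (p : pred tile) T : 0 < count p T -> exists t, List.In t T /\ p t.
Proof.
elim: T => [|a T IH] //=.
case Ha: (p a) => /= H; first by exists a; split => //; left.
have [t [Ht Hp]] := IH H. by exists t; split => //; right.
Qed.

Lemma count_In (p : pred tile) T t : List.In t T -> p t -> 0 < count p T.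
Proof.
elim: T => [|a T IH] //= [<- ->|Ht Hp] //. by rewrite addnC ltn_addr // IH.
Qed.

Lemma Good_ext m d d' T : (forall i, i < m -> d i = d' i) -> Good m d T -> Good m d' T.
Proof.
move=> E [H1 H2]; split.
  move=> t /H1 [A B C]; split => // i Hi; rewrite -E //; exact: C.
move=> x Hx; apply: H2 => i Hi; rewrite E //; exact: Hx.
Qed.

Lemma Good_base m d : (forall i, i < m -> d i = fib i.+1) ->
  Good m d [:: (id, fun _ => 0)].
Proof.
move=> E; split.
  move=> t [<-|[]]; split => //= i Hi; by rewrite /tlen /= E.
move=> x Hx /=; rewrite addn0.
suff -> : inT m x (id, fun _ => 0) by [].
apply/inTP => i Hi /=; rewrite /tlen /= add0n; have := Hx i Hi; rewrite E //.
Qed.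

Lemma eqm i m : i < m.+1 -> ~~ (i < m) -> i = m.
Proof. move=> H1; rewrite -leqNgt => H2; tolia. Qed.

Definition ext m (t : tile) : tile :=
  (fun i => if i < m then t.1 i else m, fun i => if i < m then t.2 i else 0).

Lemma Good_ext1 m d T : Good m d T ->
  Good m.+1 (fun i => if i < m then d i else fib m.+1) (map (ext m) T).
Proof.
move=> [H1 H2]; split.
  move=> t' /List.in_map_iff [t [<- Ht]]; have [A B C] := H1 t Ht.
  split => /=.
  - by move=> i Hi; case: ifP => Him; [apply: leq_trans (A i Him) _|].
  - move=> i j Hi Hj; case: ifP => Him; case: ifP => Hjm.
    + exact: B.
    + by move=> E; have := A i Him; rewrite E ltnn.
    + by move=> E; have := A j Hjm; rewrite -E ltnn.
    + by move=> _; rewrite (@eqm _ _ Hi (negbT Him)) (@eqm _ _ Hj (negbT Hjm)).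
  - move=> i Hi; rewrite /tlen /=; case: ifP => Him; first exact: C.
    by rewrite add0n.
move=> x Hx; rewrite count_map.
have Hxm : x m < fib m.+1 by have := Hx m (ltnSn m); rewrite ltnn.
rewrite -(H2 x); last by move=> i Hi; have := Hx i (ltnW Hi); rewrite Hi.
apply: eq_count => t /=.
apply/inTP/inTP => H i Hi.
  by have := H i (ltnW Hi); rewrite /ext /tlen /= Hi.
rewrite /ext /tlen /=; case: ifP => Him; first exact: H.
rewrite (@eqm _ _ Hi (negbT Him)).
by rewrite leq0n add0n.
Qed.

Definition shiftj j a (t : tile) : tile :=
  (t.1, fun i => if i == j then t.2 i + a else t.2 i).

Lemma Good_split m j d1 d2 T1 T2 : j < m ->
  (forall i, i < m -> i != j -> d1 i = d2 i) -> Good m d1 T1 -> Good m d2 T2 ->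
  Good m (fun i => if i == j then d1 j + d2 j else d1 i)
         (T1 ++ map (shiftj j (d1 j)) T2).
Proof.
move=> Hj E [A1 B1] [A2 B2]; split.
  move=> t /List.in_app_iff [Ht|/List.in_map_iff [t0 [<- Ht]]].
    have [A B C] := A1 t Ht; split => // i Hi.
    case: eqP => [->|_]; last exact: C.
    by apply: leq_trans (C j Hj) _; apply: leq_addr.
  have [A B C] := A2 t0 Ht; split => // i Hi; rewrite /tlen /=.
  case: eqP => [->|/eqP Hij]; first by have := C j Hj; rewrite /tlen => HC; tolia.
  by rewrite E //; exact: C.
move=> x Hx; rewrite count_cat count_map.
case: (ltnP (x j) (d1 j)) => Hxj.
  rewrite B1; last first.
    by move=> i Hi; have := Hx i Hi; case: eqP => [-> _|].
  rewrite count0 // => t _; apply/negP => /inTP H.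
  by have := H j Hj; rewrite /= eqxx => /andP [Hle _]; move: Hle Hxj; tolia.
rewrite count0; last first.
  move=> t Ht; apply/negP => /inTP H; have [_ _ C] := A1 t Ht.
  by have := H j Hj; have := C j Hj; move=> HC /andP[_ Hlt]; move: HC Hlt Hxj; tolia.
rewrite add0n -(B2 (fun i => if i == j then x i - d1 j else x i)).
  apply: eq_count => t /=; apply/inTP/inTP => H i Hi; have := H i Hi;
  rewrite /tlen /=; case: eqP => [->|] //; move=> /andP[H3 H4]; apply/andP; split; tolia.
move=> i Hi; have := Hx i Hi; case: eqP => [->|/eqP Hij]; first by tolia.
by rewrite E.
Qed.

Lemma Good_scale m j d T c : j < m -> Good m d T ->
  exists T', Good m (fun i => if i == j then c * d j else d i) T'.
Proof.
move=> Hj HG; elim: c => [|c [T' IH]].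
  exists [::]; split => // x Hx; have := Hx j Hj; by rewrite eqxx mul0n.
have H2 := @Good_split m j d (fun i => if i == j then c * d j else d i) T T' Hj
  (fun i _ (Hij : i != j) => esym (ifN_eq _ _ Hij)) HG IH.
eexists; apply: Good_ext H2 => i _; rewrite eqxx mulSn //.
Qed.

Definition rotf m i := if i < m then i.+1 else 0.
Definition rotb m j := if j == 0 then m else j.-1.

Lemma rotf_lt m i : i < m.+1 -> rotf m i < m.+1.
Proof. by rewrite /rotf; case: ifP. Qed.
Lemma rotb_lt m j : j < m.+1 -> rotb m j < m.+1.
Proof. rewrite /rotb; case: eqP => // _ H; tolia. Qed.
Lemma rotfb m j : j < m.+1 -> rotf m (rotb m j) = j.
Proof.
rewrite /rotb /rotf; case: j => [|j] H; first by rewrite eqxx ltnn.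
by move: H; rewrite ltnS => H; rewrite /= H.
Qed.
Lemma rotbf m i : i < m.+1 -> rotb m (rotf m i) = i.
Proof.
rewrite /rotf; case: (ltnP i m) => H1 H2; first by [].
rewrite /rotb /=; tolia.
Qed.

Arguments rotf_lt {m i}.
Arguments rotb_lt {m j}.
Arguments rotfb {m j}.
Arguments rotbf {m i}.

Lemma Good_rot m d T : Good m.+1 d T ->
  Good m.+1 (fun i => d (rotf m i)) (map (fun t : tile => (t.1 \o rotf m, t.2 \o rotf m)) T).
Proof.
move=> [H1 H2]; split.
  move=> t' /List.in_map_iff [t [<- Ht]]; have [A B C] := H1 t Ht; split => /=.
  - by move=> i Hi; apply: A; apply: rotf_lt.
  - move=> i j Hi Hj E; have := B _ _ (rotf_lt Hi) (rotf_lt Hj) E => E2.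
    by rewrite -(rotbf Hi) -(rotbf Hj) E2.
  - move=> i Hi; exact: C (rotf_lt Hi).
move=> x Hx; rewrite count_map -(H2 (fun j => x (rotb m j))).
  apply: eq_count => t /=; apply/inTP/inTP => H.
    move=> j Hj; have := H (rotb m j) (rotb_lt Hj); by rewrite /tlen /= rotfb.
  move=> i Hi; have := H (rotf m i) (rotf_lt Hi); by rewrite /tlen /= rotbf.
move=> j Hj; have := Hx (rotb m j) (rotb_lt Hj); by rewrite /tlen /= rotfb.
Qed.

Arguments Good_ext1 {m d T}.
Arguments Good_scale {m j d T}.
Arguments Good_rot {m d T}.
Arguments Good_split {m j d1 d2 T1 T2}.

Lemma mainGood m k : exists T, Good m (fun i => fib (k.+1 + i)) T.
Proof.
elim: m k => [|m IHm] k.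
  by exists [:: (id, fun _ => 0)]; apply: Good_base.
elim: k => [|k IHk].
  by exists [:: (id, fun _ => 0)]; apply: Good_base => i _; rewrite add1n.
have [T1 H1] := IHm k.+1.
have H1e := Good_ext1 H1.
have [T1' H1s] := Good_scale (fib k.+2) (ltnSn m) H1e.
have [T2 H2] := IHk.
have [T2' H2s] := Good_scale (fib m) (ltn0Sn m) H2.
have H2r := Good_rot H2s.
eexists; eapply Good_ext; last first.
  eapply (Good_split (ltnSn m)); [ | exact H1s | exact H2r].
  move=> i Hi Him /=; rewrite (negbTE Him).
  have Hlt : i < m by rewrite ltn_neqAle Him -ltnS.
  by rewrite Hlt /rotf Hlt /= addSn addnS.
move=> i Hi /=; case: eqP => [->|/eqP Him].
  rewrite eqxx ltnn /rotf ltnn /= addn0 addSn fib_add mulnC.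
  by congr (_ + _); rewrite mulnC.
have Hlt : i < m by rewrite ltn_neqAle Him -ltnS.
by rewrite Hlt.
Qed.

Definition toperm m (f : 'I_m -> 'I_m) : {perm 'I_m} :=
  match Sumbool.sumbool_of_bool (injectiveb f) with
  | left H => perm (elimT (injectiveP f) H)
  | right _ => 1%g
  end.

Arguments toperm {m}.

Lemma topermE m (f : 'I_m -> 'I_m) : injective f -> forall i, toperm f i = f i.
Proof.
move=> Hf i; rewrite /toperm; case: (Sumbool.sumbool_of_bool (injectiveb f)) => H.
  by rewrite permE.
by move: H; have /injectiveP -> := Hf.
Qed.

Lemma card_int N lo L : lo + L <= N ->
  #|[set j : 'I_N | (lo <= j) && (j < lo + L)]| = L.
Proof.
move=> H.
rewrite cardE /enum_mem size_filter.
rewrite -enumT (@eq_count _ _ (fun j : 'I_N => (lo <= j) && (j < lo + L))); last first.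
  by move=> j; rewrite -[mem _ j]/(j \in _) inE.
rewrite -(count_map val (fun j => (lo <= j) && (j < lo + L))) val_enum_ord.
have -> : N = lo + (L + (N - lo - L)) by tolia.
rewrite !iotaD !count_cat add0n.
rewrite (@eq_in_count _ _ pred0); last first.
  by move=> j; rewrite mem_iota => /andP[_ Hj] /=; rewrite leqNgt Hj.
rewrite count_pred0 (@eq_in_count _ _ predT); last first.
  by move=> j; rewrite mem_iota => /andP[H1 H2] /=; rewrite H1 H2.
rewrite count_predT size_iota (@eq_in_count _ _ pred0) ?count_pred0 ?addn0 //.
by move=> j; rewrite mem_iota => /andP[H1 _] /=; rewrite ltnNge H1 andbF.
Qed.

Definition chain_x k m (c : chain k m) : nat -> nat :=
  fun i => if (insub i : option 'I_m) is Some i' then nat_of_ord (c i') else 0.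

Arguments chain_x {k m}.

Lemma chain_xE k m (c : chain k m) (i : 'I_m) : chain_x c i = c i.
Proof. by rewrite /chain_x valK. Qed.

Arguments chain_xE {k m}.

Lemma chain_box k m (c : chain k m) : inbox m (fun i => fib (k.+1 + i)) (chain_x c).
Proof. move=> i Hi; by rewrite (chain_xE c (Ordinal Hi)). Qed.

Definition conv k m (t : tile) : block k m :=
  @Block k m (toperm (fun i : 'I_m => insubd i (t.1 i)))
    (fun i => [set j : 'I_(fib (k.+1 + i)) | (t.2 i <= j) && (j < t.2 i + tlen t i)]).

Arguments chain_box {k m}.

Lemma conv_chains k m t (c : chain k m) :
  (c \in block_chains (conv k m t)) = inT m (chain_x c) t.
Proof.
rewrite inE; apply/forallP/inTP => H.
  move=> i Hi; have := H (Ordinal Hi); rewrite inE /= -(chain_xE c (Ordinal Hi)) //.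
move=> i; rewrite inE /= -chain_xE; exact: H.
Qed.

Lemma conv_type k m t : tok m (fun i => fib (k.+1 + i)) t -> block_of_type (conv k m t).
Proof.
move=> [A B C] i /=.
have Hinj : injective (fun i : 'I_m => insubd i (t.1 i)).
  move=> i1 i2 /(congr1 val); rewrite !val_insubd (A _ (ltn_ord i1)) (A _ (ltn_ord i2)).
  by move/(B _ _ (ltn_ord i1) (ltn_ord i2)) => E; apply: val_inj.
rewrite topermE // val_insubd (A _ (ltn_ord i)) card_int //; exact: C.
Qed.

Lemma all_In (p : pred tile) s : (forall t, List.In t s -> p t) -> all p s.
Proof.
elim: s => [|a s IH] //= H; rewrite H /=; last by left.
by apply: IH => t Ht; apply: H; right.
Qed.

Lemma pw_count m d (P : rel tile) T :
  (forall t1 t2, (forall x, inbox m d x -> ~~ (inT m x t1 && inT m x t2)) -> P t1 t2) ->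
  (forall x, inbox m d x -> count (inT m x) T <= 1) -> pairwise P T.
Proof.
elim: T => [|a T IH] //= HP HC; apply/andP; split.
  apply: all_In => t Ht; apply: HP => x Hx; apply/negP => /andP[H1 H2].
  have Hpos := @count_In (inT m x) T t Ht H2.
  have := HC x Hx; rewrite /= H1 add1n ltnS leqn0 => /eqP E.
  by rewrite E in Hpos.
apply: IH => // x Hx; have := HC x Hx; apply: leq_trans; exact: leq_addl.
Qed.

Theorem theorem2 (k n : nat) :
  k < n -> exists T : seq (block k (n - k)), is_tiling T.
Proof.
move=> Hkn; have [T [HA HB]] := mainGood (n - k) k.
exists (map (conv k (n - k)) T); split.
- move=> B /List.in_map_iff [t [<- Ht]]; apply: conv_type; exact: HA.
- rewrite pairwise_map; apply: (@pw_count (n - k) (fun i => fib (k.+1 + i))).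
    move=> t1 t2 H /=; rewrite disjoint_subset; apply/subsetP => c Hc1.
    rewrite inE conv_chains; apply/negP => Hc2.
    rewrite conv_chains in Hc1.
    by have := H _ (chain_box c); rewrite Hc1 Hc2.
  by move=> x Hx; rewrite HB.
- move=> c; have Hc := HB _ (chain_box c).
  have [t [Ht Hin]] : exists t, List.In t T /\ inT (n - k) (chain_x c) t.
    by apply: count_pos; rewrite Hc.
  exists (conv k (n - k) t); first exact: List.in_map.
  by rewrite conv_chains.
Qed.
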